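(* For all $1\le i\le n$ and $1\le r\le n$, $$|\mathcal{I}^{(r)}_{x_i}(P_n^* )|\le |\mathcal{I}^{(r)}_{p_i}(P_n^* )|.$$
   Context: $\mathcal{I}^{(r)}_v(G)$ denotes the family of independent $r$-sets (sets of $r$ pairwise non-adjacent vertices) of a graph $G$ containing the vertex $v$. For a graph $G$ with vertices $x_1,\dots,x_n$, the pendant graph $G^*$ has vertex set $\{x_1,\dots,x_n\}\sqcup\{p_1,\dots,p_n\}$ and edge set $E(G)\sqcup\{x_1p_1,\dots,x_np_n\}$. $P_n$ is the path with vertices $x_1,\dots,x_n$ and edges $x_jx_{j+1}$, $1\le j\le n-1$, and $P_n^*$ its pendant graph. *)

(* Defs.v *)
From mathcomp Require Import all_boot.
Set Implicit Arguments. Unset Strict Implicit. Unset Printing Implicit Defensive.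

(* A simple graph on a finite vertex type T is given by its adjacency relation
   (assumed symmetric and irreflexive where relevant). *)

Definition independent (T : finType) (adj : rel T) (S : {set T}) : bool :=
  [forall x in S, forall y in S, ~~ adj x y].

Definition indep_rsets_at (T : finType) (adj : rel T) (r : nat) (v : T)
  : {set {set T}} :=
  [set S : {set T} | [&& independent adj S, #|S| == r & v \in S]].

(* Vertices of P_n^*: inl i = x_{i+1}, inr i = p_{i+1} (0-indexed ordinals). *)
Definition pvert (n : nat) := ('I_n + 'I_n)%type.

Definition path_adj (n : nat) (i j : 'I_n) : bool :=
  (i.+1 == j :> nat) || (j.+1 == i :> nat).

Definition pendant_adj (n : nat) (adjG : rel 'I_n) : rel (pvert n) :=
  fun u v =>
    match u, v with
    | inl i, inl j => adjG i j
    | inl i, inr j => i == j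
    | inr i, inl j => i == j
    | inr _, inr _ => false
    end.

Definition path_pendant_adj (n : nat) : rel (pvert n) :=
  pendant_adj (@path_adj n).

(* Main.v *)
Require Import Defs.
From mathcomp Require Import all_boot.

Lemma inj_aux (n : nat) (i : 'I_n) (S : {set pvert n}) :
  inl i \in S -> inr i \notin S ->
  inl i |: ((inr i |: (S :\ inl i)) :\ inr i) = S.
Proof.
move=> Hl Hr; apply/setP => x; rewrite !inE.
case: (eqVneq x (inl i)) => [->|nx] //=.
case: (eqVneq x (inr i)) => [->|ny] //=; first by rewrite (negbTE Hr).
Qed.

(* Indices are 0-based: i : 'I_n stands for the paper's i+1 in {1..n}. *)
Theorem lemma5 (n : nat) (i : 'I_n) (r : nat) :
  1 <= r <= n ->
  #|indep_rsets_at (@path_pendant_adj n) r (inl i)|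
    <= #|indep_rsets_at (@path_pendant_adj n) r (inr i)|.
Proof.
move=> _.
set A := indep_rsets_at _ r (inl i).
set B := indep_rsets_at _ r (inr i).
pose f := fun S : {set pvert n} => inr i |: (S :\ inl i).
have facts : forall S, S \in A -> [/\ independent (@path_pendant_adj n) S,
    #|S| = r, inl i \in S & inr i \notin S].
  move=> S; rewrite inE => /and3P [Hind /eqP Hc Hl]; split => //.
  apply/negP => Hr.
  by move: Hind => /forallP /(_ (inl i)) /implyP /(_ Hl) /forallP
     /(_ (inr i)) /implyP /(_ Hr); rewrite /= eqxx.
have -> : #|A| = #|f @: A|.
  rewrite card_in_imset // => S1 S2 H1 H2 E.
  have [_ _ l1 r1] := facts _ H1; have [_ _ l2 r2] := facts _ H2.
  by rewrite -(@inj_aux _ _ _ l1 r1) -(@inj_aux _ _ _ l2 r2); move: E; rewrite /f => ->.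
apply: subset_leq_card; apply/subsetP => T /imsetP [S HS ->].
have [Hind Hc Hl Hr] := facts _ HS.
rewrite inE; apply/and3P; split; last by rewrite /f setU11.
- apply/forallP => x; apply/implyP; rewrite !inE => Hx.
  apply/forallP => y; apply/implyP; rewrite !inE => Hy.
  case/orP: Hx => [/eqP Ex|/andP [nx Sx]];
  case/orP: Hy => [/eqP Ey|/andP [ny Sy]].
  + by rewrite Ex Ey.
  + subst x; case: y ny Sy => j //= nj _; apply/eqP => E; by rewrite E eqxx in nj.
  + subst y; case: x nx Sx => j //= nj _; apply/eqP => E; by rewrite E eqxx in nj.
  + move: Hind => /forallP /(_ x) /implyP /(_ Sx) /forallP /(_ y) /implyP /(_ Sy).
    by [].
- rewrite /f cardsU1 !inE negb_and Hr orbT /=.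
  by rewrite (cardsD1 (inl i) S) Hl in Hc; rewrite -Hc.
Qed.
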